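(* Let $F$ be a graph with chromatic number $3$ that has a color-critical edge. Then there exists $n_0$ such that for every $n\ge n_0$, \[\mathrm{ex}(n,P_3,F)=\mathcal{N}(P_3,T_2(n)).\] In other words, $P_3$ is $F$-Tur\'an-good.
   Context: For graphs $H$ and $G$, $\mathcal{N}(H,G)$ denotes the number of (not necessarily induced) subgraphs of $G$ isomorphic to $H$. For graphs $H,F$, $\mathrm{ex}(n,H,F)$ is the maximum of $\mathcal{N}(H,G)$ over all $F$-free graphs $G$ on $n$ vertices. $P_3$ is the path on $3$ vertices (two edges). $T_r(n)$ is the Tur\'an graph: the complete $r$-partite graph on $n$ vertices whose part sizes are $\lfloor n/r\rfloor$ or $\lceil n/r\rceil$. An edge $e$ of $F$ is color-critical if deleting $e$ decreases the chromatic number of $F$. If $F$ is $k$-chromatic and $H$ does not contain $F$, $H$ is called $F$-Tur\'an-good if $\mathrm{ex}(n,H,F)=\mathcal{N}(H,T_{k-1}(n))$ for all sufficiently large $n$. *)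

(* Defs.v *)
From mathcomp Require Import all_boot.
Set Implicit Arguments.
Unset Strict Implicit.
Unset Printing Implicit Defensive.



Definition simple_graph (V : finType) (G : rel V) : Prop :=
  symmetric G /\ irreflexive G.

Definition edges (V : finType) (G : rel V) : {set {set V}} :=
  [set e : {set V} | [exists x, exists y, G x y && (e == [set x; y])]].

(* a (not necessarily induced) subgraph (S, E) of G *)
Definition is_subgraph (V : finType) (G : rel V)
    (p : {set V} * {set {set V}}) : bool :=
  (p.2 \subset edges G) && [forall e in p.2, e \subset p.1].

Definition iso_to (W V : finType) (H : rel W)
    (p : {set V} * {set {set V}}) : bool :=
  [exists f : {ffun W -> V},
     injectiveb f && (f @: [set: W] == p.1) &&
     [forall x, forall y, H x y == ([set f x; f y] \in p.2)]].

Definition Ncount (W V : finType) (H : rel W) (G : rel V) : nat :=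
  #|[set p : {set V} * {set {set V}} | is_subgraph G p && iso_to H p]|.

Definition colorable (V : finType) (G : rel V) (k : nat) : bool :=
  [exists c : {ffun V -> 'I_k}, [forall x, forall y, G x y ==> (c x != c y)]].

Definition chromatic_number (V : finType) (G : rel V) : nat :=
  \big[minn/#|V|]_(k < #|V|.+1 | colorable G k) k.

Definition delete_edge (V : finType) (G : rel V) (x y : V) : rel V :=
  fun u v => G u v && ([set u; v] != [set x; y]).

Definition color_critical_edge (V : finType) (F : rel V) (x y : V) : Prop :=
  F x y /\ chromatic_number (delete_edge F x y) < chromatic_number F.

Definition grel (n : nat) (g : {ffun 'I_n * 'I_n -> bool}) : rel 'I_n :=
  fun x y => g (x, y).

Definition simpleb (n : nat) (g : {ffun 'I_n * 'I_n -> bool}) : bool :=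
  [forall x, forall y, g (x, y) == g (y, x)] && [forall x, ~~ g (x, x)].

Definition ex (n : nat) (W U : finType) (H : rel W) (F : rel U) : nat :=
  \max_(g : {ffun 'I_n * 'I_n -> bool} |
          simpleb g && (Ncount F (grel g) == 0)) Ncount H (grel g).

Definition P3 : rel 'I_3 := fun i j => (i.+1 == j :> nat) || (j.+1 == i :> nat).

Definition turan2 (n : nat) : rel 'I_n :=
  fun i j => (i < n./2) != (j < n./2).

Arguments turan2 n : clear implicits.
Arguments ex n {W U} H F.

(* Main.v *)
Require Import Defs.
From mathcomp Require Import all_boot zify.
Set Implicit Arguments.
Unset Strict Implicit.
Unset Printing Implicit Defensive.

Lemma bigmin_le (I : finType) (P : pred I) (F : I -> nat) idx i0 :
  P i0 -> \big[minn/idx]_(i | P i) F i <= F i0.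
Proof.
move=> Pi0; rewrite -big_filter.
have: i0 \in [seq i <- index_enum I | P i] by rewrite mem_filter Pi0 mem_index_enum.
elim: [seq _ <- _ | _] => [//|j r IH]; rewrite big_cons inE => /orP[/eqP<-|/IH h].
  exact: geq_minl.
exact: leq_trans (geq_minr _ _) h.
Qed.

Lemma bigmin_le_idx (I : finType) (P : pred I) (F : I -> nat) idx :
  \big[minn/idx]_(i | P i) F i <= idx.
Proof.
apply: (big_rec (fun x => x <= idx)) => // i x _ h.
exact: leq_trans (geq_minr _ _) h.
Qed.

Section Col.
Variable V : finType.
Implicit Types G : rel V.

Lemma colorable_mono G k k' : k <= k' -> colorable G k -> colorable G k'.
Proof.
move=> le /existsP[c /forallP Hc]; apply/existsP.
exists [ffun x => widen_ord le (c x)]; apply/forallP => x; apply/forallP => y.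
apply/implyP => Gxy; rewrite !ffunE; move/forallP: (Hc x) => /(_ y) /implyP /(_ Gxy).
by apply: contra => /eqP [] /val_inj ->.
Qed.

Lemma colorable_card G : irreflexive G -> colorable G #|V|.
Proof.
move=> irr; apply/existsP; exists [ffun x => enum_rank x].
apply/forallP => x; apply/forallP => y; apply/implyP => Gxy; rewrite !ffunE.
apply/negP => /eqP /enum_rank_inj exy; by rewrite exy irr in Gxy.
Qed.

Lemma chrom_le G k : colorable G k -> chromatic_number G <= k.
Proof.
move=> ck; rewrite /chromatic_number.
case: (ltnP k #|V|.+1) => hk.
  have := @bigmin_le _ (fun i : 'I_#|V|.+1 => colorable G i) (fun i => val i) #|V| (Ordinal hk) ck.
  by [].
exact: leq_trans (bigmin_le_idx _ _ _) (ltnW hk).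
Qed.

Lemma chrom_col G : irreflexive G -> colorable G (chromatic_number G).
Proof.
move=> irr; rewrite /chromatic_number.
apply: (big_ind (fun x => colorable G x)) => //; first exact: colorable_card.
by move=> x y cx cy; rewrite /minn; case: ifP.
Qed.

End Col.

Lemma set2_eq (T : finType) (a b c d : T) :
  [set a; b] = [set c; d] -> (a = c /\ b = d) \/ (a = d /\ b = c).
Proof.
move=> E.
have ha : a \in [set c; d] by rewrite -E set21.
have hb : b \in [set c; d] by rewrite -E set22.
have hc : c \in [set a; b] by rewrite E set21.
have hd : d \in [set a; b] by rewrite E set22.
move: ha hb hc hd; rewrite !in_set2.
move=> /orP[/eqP ac|/eqP ad] /orP[/eqP bc|/eqP bd] /orP[/eqP ca|/eqP cb] /orP[/eqP da|/eqP db];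
  subst; by [left|right].
Qed.

Lemma eq_set2b (T : finType) (x y z w : T) :
  ([set x; y] == [set z; w]) = ((x == z) && (y == w)) || ((x == w) && (y == z)).
Proof.
apply/eqP/orP => [/set2_eq [[-> ->]|[-> ->]]|[/andP[/eqP-> /eqP->]|/andP[/eqP-> /eqP->]]].
- by left; rewrite !eqxx.
- by right; rewrite !eqxx.
- by [].
- exact: setUC.
Qed.

Lemma Ncount_ext (W V : finType) (H : rel W) (G1 G2 : rel V) :
  G1 =2 G2 -> Ncount H G1 = Ncount H G2.
Proof.
move=> e; rewrite /Ncount /is_subgraph.
have -> : edges G1 = edges G2.
  apply/setP => x; rewrite !inE; apply/existsP/existsP => [[a /existsP[b]]|[a /existsP[b]]];
  exists a; apply/existsP; exists b; by rewrite ?e // -e.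
by [].
Qed.

Lemma Ncount_pos (W V : finType) (H : rel W) (G : rel V) p :
  is_subgraph G p -> iso_to H p -> 0 < Ncount H G.
Proof.
move=> h1 h2; rewrite /Ncount card_gt0; apply/set0Pn; exists p; by rewrite inE h1 h2.
Qed.

Lemma bip_free (W V : finType) (F : rel W) (G : rel V) (col : V -> bool) :
  (forall a b, G a b -> col a != col b) -> ~~ colorable F 2 -> Ncount F G = 0.
Proof.
move=> hcol ncol; apply/eqP; rewrite cards_eq0; apply/eqP/setP => p.
rewrite inE in_set0; apply/negP => /andP[/andP[sub _] /existsP[f /andP[_ /forallP iso]]].
case/negP: ncol; apply/existsP.
exists [ffun a => @Ordinal 2 (col (f a)) (leq_b1 _)].
apply/forallP => a; apply/forallP => b; apply/implyP => Fab; rewrite !ffunE.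
move/forallP: (iso a) => /(_ b); rewrite Fab eq_sym => /eqP hin.
have := subsetP sub _ hin; rewrite inE => /existsP[x /existsP[y /andP[Gxy /eqP e]]].
apply/negP => /eqP [] ec.
have ec' : col (f a) = col (f b) by move: ec; case: (col (f a)); case: (col (f b)).
case: (set2_eq e) => -[ex ey]; subst; have := hcol _ _ Gxy; by rewrite ec' ?eqxx // eq_sym ec' eqxx.
Qed.

Section P3count.
Variable V : finType.
Variable G : rel V.
Hypothesis Gsym : symmetric G.
Hypothesis Girr : irreflexive G.

Definition Nb (v : V) : {set V} := [set u | G v u].

Definition o0 : 'I_3 := @Ordinal 3 0 isT.
Definition o1 : 'I_3 := @Ordinal 3 1 isT.
Definition o2 : 'I_3 := @Ordinal 3 2 isT.

Lemma I3_cases (i : 'I_3) : [\/ i = o0, i = o1 | i = o2].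
Proof.
case: i => [[|[|[|i]]] Hi] //; [apply: Or31|apply: Or32|apply: Or33]; exact: val_inj.
Qed.

Definition Dom : {set V * {set V}} :=
  [set q : V * {set V} | (q.2 \subset Nb q.1) && (#|q.2| == 2)].

Definition phi (q : V * {set V}) : {set V} * {set {set V}} :=
  (q.1 |: q.2, [set [set q.1; c] | c in q.2]).

Lemma card_Dom : #|Dom| = \sum_v 'C(#|Nb v|, 2).
Proof.
rewrite -sum1_card.
have h : forall v, 'C(#|Nb v|, 2) = \sum_(A : {set V} | (A \subset Nb v) && (#|A| == 2)) 1.
  by move=> v; rewrite -(cards_draws (Nb v) 2) -sum1_card; apply: eq_bigl => A; rewrite inE.
rewrite (eq_bigr _ (fun v _ => h v)) pair_big_dep /=.
apply: eq_bigl => q; by rewrite inE.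
Qed.

Lemma mem_E2 (v a b : V) X :
  (X \in [set [set v; c] | c in [set a; b]]) = (X == [set v; a]) || (X == [set v; b]).
Proof.
apply/imsetP/orP => [[c]|[/eqP->|/eqP->]].
  by rewrite in_set2 => /orP[/eqP->|/eqP->] ->; [left|right].
  by exists a; rewrite ?set21.
by exists b; rewrite ?set22.
Qed.

Lemma edges_set2 x y : [set x; y] \in edges G -> G x y.
Proof.
rewrite inE => /existsP[a /existsP[b /andP[Gab /eqP e]]].
by case: (set2_eq e) => -[-> ->]; rewrite // Gsym.
Qed.

Lemma set2_edges x y : G x y -> [set x; y] \in edges G.
Proof. by move=> h; rewrite inE; apply/existsP; exists x; apply/existsP; exists y; rewrite h eqxx. Qed.

Lemma phi_inj : {in Dom &, injective phi}.
Proof.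
move=> [v A] [v' A']; rewrite !inE /= => /andP[sA /cards2P[a [b [ab eA]]]]
  /andP[sA' /cards2P[a' [b' [ab' eA']]]] [e1 e2].
have vA : v \notin A.
  by apply/negP => /(subsetP sA); rewrite inE Girr.
have v'A' : v' \notin A'.
  by apply/negP => /(subsetP sA'); rewrite inE Girr.
suff evv : v = v'.
  by subst v'; congr pair; rewrite -(setU1K vA) -(setU1K v'A') e1.
apply/eqP; apply: contraT => nvv.
have hx : forall c, c \in A -> v' \in [set v; c].
  move=> c cA.
  have : [set v; c] \in [set [set v'; c0] | c0 in A'] by rewrite -e2; apply/imsetP; exists c.
  by case/imsetP => c0 _ ->; rewrite set21.
move: (hx a) (hx b); rewrite eA !set21 !set22 !in_set2 eq_sym (negbTE nvv) /=.
move=> /(_ isT) /eqP h1 /(_ isT) /eqP h2; by rewrite -h1 -h2 eqxx in ab.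
Qed.

Lemma copies_eq :
  [set p | is_subgraph G p && iso_to P3 p] = phi @: Dom.
Proof.
apply/setP => -[S E]; rewrite inE; apply/idP/imsetP.
- rewrite /is_subgraph /iso_to /=.
  case/andP => /andP[sub /forallP sS] /existsP[f /andP[/andP[/injectiveP finj /eqP fim] /forallP iso]].
  have isoij : forall i j, P3 i j = ([set f i; f j] \in E).
    by move=> i j; move/forallP: (iso i) => /(_ j) /eqP.
  have ne : forall i j, i != j -> f i != f j.
    by move=> i j; apply: contra => /eqP /finj ->.
  have G10 : G (f o1) (f o0) by apply: edges_set2; apply: (subsetP sub); rewrite -isoij.
  have G12 : G (f o1) (f o2) by apply: edges_set2; apply: (subsetP sub); rewrite -isoij.
  exists (f o1, [set f o0; f o2]).
    rewrite inE /=; apply/andP; split.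
      by apply/subsetP => x; rewrite in_set2 => /orP[/eqP->|/eqP->]; rewrite inE.
    by rewrite cards2 ne.
  rewrite /phi /=; congr pair.
    apply/setP => x; rewrite -fim !inE; apply/imsetP/idP => [[i _ ->]|].
      by case: (I3_cases i) => ->; rewrite eqxx ?orbT.
    by case/or3P => /eqP->; [exists o1|exists o0|exists o2].
  apply/setP => X; rewrite mem_E2; apply/idP/idP => [XE|].
    have := subsetP sub _ XE; rewrite inE => /existsP[x /existsP[y /andP[Gxy /eqP eX]]].
    have := sS X; rewrite XE /= => /subsetP sXS.
    have : x \in f @: setT by rewrite fim; apply: sXS; rewrite eX set21.
    case/imsetP => i _ exi.
    have : y \in f @: setT by rewrite fim; apply: sXS; rewrite eX set22.
    case/imsetP => j _ eyj.
    have : P3 i j by rewrite isoij -exi -eyj -eX.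
    subst x y; subst X.
    by case: (I3_cases i) => ->; case: (I3_cases j) => -> //; rewrite ?eqxx ?orbT // setUC eqxx ?orbT.
  case/orP => /eqP ->; rewrite setUC -isoij //.
- case=> [[v A]]; rewrite inE /= => /andP[sA /cards2P[a [b [ab eA]]]] ->; subst A.
  have Gva : G v a by have := subsetP sA a; rewrite !inE eqxx => /(_ isT).
  have Gvb : G v b by have := subsetP sA b; rewrite !inE eqxx orbT => /(_ isT).
  have va : v != a by apply: contraTneq Gva => ->; rewrite Girr.
  have vb : v != b by apply: contraTneq Gvb => ->; rewrite Girr.
  rewrite /is_subgraph /iso_to /phi /=; apply/andP; split.
    apply/andP; split.
      apply/subsetP => X; rewrite mem_E2 => /orP[/eqP->|/eqP->]; exact: set2_edges.
    apply/forallP => X; apply/implyP; rewrite mem_E2 => /orP[/eqP->|/eqP->];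
      apply/subsetP => x; rewrite !inE => /orP[->|->]; by rewrite ?orbT.
  apply/existsP; exists [ffun i : 'I_3 => if val i == 0 then a else if val i == 1 then v else b].
  have f0 : [ffun i : 'I_3 => if val i == 0 then a else if val i == 1 then v else b] o0 = a by rewrite ffunE.
  have f1 : [ffun i : 'I_3 => if val i == 0 then a else if val i == 1 then v else b] o1 = v by rewrite ffunE.
  have f2 : [ffun i : 'I_3 => if val i == 0 then a else if val i == 1 then v else b] o2 = b by rewrite ffunE.
  set f := [ffun _ => _] in f0 f1 f2 *.
  have fc : forall i, [\/ i = o0 /\ f i = a, i = o1 /\ f i = v | i = o2 /\ f i = b].
    by move=> i; case: (I3_cases i) => ->; [apply: Or31|apply: Or32|apply: Or33].
  apply/andP; split; [apply/andP; split|].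
  + apply/injectiveP => i j.
    by case: (fc i) => -[-> ->]; case: (fc j) => -[-> ->] // e;
      move: va vb ab; rewrite e ?eqxx // => /negP; rewrite ?andbF ?andFb //; rewrite eq_sym ?eqxx //.
  + apply/eqP/setP => x; rewrite !inE; apply/imsetP/idP => [[i _ ->]|].
      by case: (fc i) => -[_ ->]; rewrite eqxx ?orbT.
    by case/or3P => /eqP->; [exists o1|exists o0|exists o2].
  + apply/forallP => i; apply/forallP => j; rewrite mem_E2.
    have e1 : (v == a) = false by apply/negbTE.
    have e2 : (v == b) = false by apply/negbTE.
    have e3 : (a == b) = false by apply/negbTE.
    have e4 : (a == v) = false by rewrite eq_sym.
    have e5 : (b == v) = false by rewrite eq_sym.
    have e6 : (b == a) = false by rewrite eq_sym.
    case: (fc i) => -[-> ->]; case: (fc j) => -[-> ->]; rewrite /P3 /= !eq_set2b;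
    by rewrite ?eqxx ?e1 ?e2 ?e3 ?e4 ?e5 ?e6.
Qed.

Lemma NcountP3 : Ncount P3 G = \sum_v 'C(#|Nb v|, 2).
Proof. by rewrite /Ncount copies_eq card_in_imset ?card_Dom //; exact: phi_inj. Qed.

End P3count.

Section Emb1.
Variables (T1 T2 : finType) (P : {set T1}) (Q : {set T2}) (q0 : T2).
Hypothesis PQ : #|P| <= #|Q|.
Definition emb (z : T1) : T2 := nth q0 (enum Q) (index z (enum P)).

Lemma emb_idx z : z \in P -> index z (enum P) < size (enum Q).
Proof. by move=> zP; rewrite -cardE; apply: leq_trans PQ; rewrite cardE index_mem mem_enum. Qed.

Lemma emb_mem z : z \in P -> emb z \in Q.
Proof. by move=> zP; rewrite -mem_enum; apply: mem_nth; exact: emb_idx. Qed.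

Lemma emb_inj z1 z2 : z1 \in P -> z2 \in P -> emb z1 = emb z2 -> z1 = z2.
Proof.
move=> h1 h2 /eqP; rewrite /emb nth_uniq ?emb_idx ?enum_uniq // => /eqP e.
have n1 := @nth_index _ z1 z1 (enum P); have n2 := @nth_index _ z1 z2 (enum P).
rewrite !mem_enum in n1 n2.
by rewrite -(n1 h1) -(n2 h2) e.
Qed.
End Emb1.

Lemma I2_two (i j k : 'I_2) : i != k -> j != k -> i = j.
Proof.
move=> h1 h2; apply: val_inj; move: h1 h2; rewrite -!(inj_eq val_inj).
by case: i j k => [[|[|i]] hi] [[|[|j]] hj] [[|[|k]] hk].
Qed.

Section Embed.
Variables (U V : finType) (F : rel U) (G : rel V).
Hypotheses (Fsym : symmetric F) (Firr : irreflexive F).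
Hypotheses (Gsym : symmetric G) (Girr : irreflexive G).
Hypothesis ncol : ~~ colorable F 2.
Variables (x y : U).
Hypothesis Fxy : F x y.
Hypothesis ccol : colorable (delete_edge F x y) 2.

Variables (u v : V) (Z B : {set V}).
Hypotheses (Guv : G u v) (BN : B \subset Nb G u :&: Nb G v).
Hypotheses (uZ : u \notin Z) (vZ : v \notin Z) (ZB : forall z, z \in Z -> B \subset Nb G z).
Hypotheses (tB : #|U| <= #|B|) (tZ : #|U| <= #|Z| + 2).

Lemma embed : 0 < Ncount F G.
Proof.
case/existsP: ccol => c /forallP hc.
have hc' : forall a b, F a b -> [set a; b] != [set x; y] -> c a != c b.
  move=> a b Fab ne; move/forallP: (hc a) => /(_ b) /implyP; apply; by rewrite /delete_edge Fab ne.
have xy : x != y by apply: contraTneq Fxy => ->; rewrite Firr.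
have cxy : c x = c y.
  apply/eqP; apply: contraR ncol => nxy; apply/existsP; exists c.
  apply/forallP => a; apply/forallP => b; apply/implyP => Fab.
  case: (boolP ([set a; b] == [set x; y])) => [/eqP/set2_eq [[-> ->]|[-> ->]]|ne].
  - exact: nxy.
  - by rewrite eq_sym.
  - exact: hc'.
set P0 := [set z | c z == c x].
set P0' := P0 :\ x :\ y.
set P1 := ~: P0.
have xP0 : x \in P0 by rewrite inE.
have yP0 : y \in P0 by rewrite inE cxy.
have cP : #|P0| + #|P1| = #|U| by rewrite cardsC.
have c0 : #|P0| = (#|P0'| + 2)%N.
  rewrite (cardsD1 x P0) xP0 (cardsD1 y (P0 :\ x)).
  have -> : y \in P0 :\ x by rewrite in_setD1 eq_sym xy yP0.
  rewrite /P0' /=; lia.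
have hP0' : #|P0'| <= #|Z| by lia.
have hP1 : #|P1| <= #|B| by lia.
pose phi z := if z == x then u else if z == y then v else
  if c z == c x then emb P0' Z u z else emb P1 B u z.
have uB : u \notin B.
  by apply/negP => /(subsetP BN); rewrite !inE Girr.
have vB : v \notin B.
  by apply/negP => /(subsetP BN); rewrite !inE Girr andbF.
have ZBd : forall z, z \in Z -> z \notin B.
  by move=> z zZ; apply/negP => /(subsetP (ZB zZ)); rewrite inE Girr.
have uv : u != v by apply: contraTneq Guv => ->; rewrite Girr.
have cls : forall z, [\/ z = x /\ phi z = u, z = y /\ phi z = v,
                        z \in P0' /\ phi z \in Z | z \in P1 /\ phi z \in B].
  move=> z; rewrite /phi.
  case: (eqVneq z x) => [->|zx]; first by apply: Or41.
  case: (eqVneq z y) => [->|zy]; first by apply: Or42.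
  case: (boolP (c z == c x)) => czx.
    have zP : z \in P0' by rewrite !inE zx zy czx.
    by apply: Or43; split => //; exact: emb_mem.
  have zP : z \in P1 by rewrite !inE czx.
  by apply: Or44; split => //; exact: emb_mem.
have phi_inj : injective phi.
  move=> z1 z2.
  have e0 : forall z, z \in P0' -> phi z = emb P0' Z u z.
    by move=> z; rewrite !inE /phi => /and3P[/negbTE -> /negbTE -> ->].
  have e1 : forall z, z \in P1 -> phi z = emb P1 B u z.
    move=> z; rewrite !inE /phi => /negbTE czx.
    have -> : (z == x) = false by apply: contraFF czx => /eqP->.
    have -> : (z == y) = false by apply: contraFF czx => /eqP->; rewrite cxy.
    by rewrite czx.
  case: (cls z1) => -[h1 p1]; case: (cls z2) => -[h2 p2]; rewrite ?p1 ?p2 => e;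
  first [ by rewrite h1 h2
        | by move: uv; rewrite e eqxx
        | by move: uv; rewrite -e eqxx
        | by move: uv; rewrite eq_sym e eqxx
        | by move: uZ; rewrite e p2
        | by move: uZ; rewrite -e p1
        | by move: vZ; rewrite e p2
        | by move: vZ; rewrite -e p1
        | by move: uB; rewrite e p2
        | by move: uB; rewrite -e p1
        | by move: vB; rewrite e p2
        | by move: vB; rewrite -e p1
        | by move: (ZBd _ p1); rewrite e p2
        | by move: (ZBd _ p2); rewrite -e p1
        | by apply: (@emb_inj _ _ P0' Z u hP0' _ _ h1 h2); rewrite -e0 // -e0 // e
        | by apply: (@emb_inj _ _ P1 B u hP1 _ _ h1 h2); rewrite -e1 // -e1 // e
        | idtac "REMAIN"; match goal with H: ?t |- _ => idtac H ":" t; fail end ].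
have px : phi x = u by rewrite /phi eqxx.
have yx : (y == x) = false by rewrite eq_sym; exact/negbTE.
have py : phi y = v by rewrite /phi yx eqxx.
have phiB : forall b, c b != c x -> phi b \in B.
  move=> b cb; case: (cls b) => -[h p] //.
  - by move: cb; rewrite h eqxx.
  - by move: cb; rewrite h cxy eqxx.
  - by move: h cb; rewrite !inE => /and3P[_ _ ->].
have adjB : forall a, c a == c x -> forall b', b' \in B -> G (phi a) b'.
  move=> a ca b' hb; have := subsetP BN _ hb; rewrite !inE => /andP[G1 G2].
  case: (cls a) => -[h p]; rewrite ?p //.
  - by have := subsetP (ZB p) _ hb; rewrite inE.
  - by move: h; rewrite !inE ca.
have both : forall a b, F a b -> c a = c b -> [set a; b] = [set x; y].
  move=> a b Fab cab; apply/eqP; apply: contraT => ne.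
  by have := hc' _ _ Fab ne; rewrite cab eqxx.
have edge : forall a b, F a b -> G (phi a) (phi b).
  move=> a b Fab.
  case: (boolP (c a == c x)) => ca; case: (boolP (c b == c x)) => cb.
  - have := both _ _ Fab; rewrite (eqP ca) (eqP cb) => /(_ erefl) /set2_eq [[-> ->]|[-> ->]].
      by rewrite px py.
    by rewrite px py Gsym.
  - exact: adjB (phiB _ cb).
  - rewrite Gsym; exact: adjB (phiB _ ca).
  - have := both _ _ Fab (I2_two ca cb) => /set2_eq [[ea _]|[ea _]].
      by move: ca; rewrite ea eqxx.
    by move: ca; rewrite ea cxy eqxx.
pose f := [ffun z => phi z].
have finj : injective f by move=> a b; rewrite !ffunE; exact: phi_inj.
apply: (@Ncount_pos _ _ F G (f @: setT, [set e | [exists a, exists b, F a b && (e == [set f a; f b])]])).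
- rewrite /is_subgraph /=; apply/andP; split.
    apply/subsetP => e; rewrite inE => /existsP[a /existsP[b /andP[Fab /eqP->]]].
    by apply: set2_edges; rewrite !ffunE; exact: edge.
  apply/forallP => e; apply/implyP; rewrite inE => /existsP[a /existsP[b /andP[Fab /eqP->]]].
  by apply/subsetP => w; rewrite in_set2 => /orP[/eqP->|/eqP->]; apply/imsetP; eexists.
- apply/existsP; exists f; apply/andP; split; [apply/andP; split|] => //.
    by apply/injectiveP.
  apply/forallP => a; apply/forallP => b; apply/eqP; apply/idP/idP => [Fab|].
    by rewrite inE; apply/existsP; exists a; apply/existsP; exists b; rewrite Fab eqxx.
  rewrite inE => /existsP[a' /existsP[b' /andP[Fab' /eqP e]]].
  by case: (set2_eq e) => -[/finj ea /finj eb]; rewrite ea eb // Fsym.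
Qed.


End Embed.

Lemma C2n n : 'C(n, 2) * 2 + n = n * n.
Proof.
elim: n => [//|n IH]; rewrite binS bin1; lia.
Qed.

Definition gf (m : nat) := m./2 * 'C(m - m./2, 2) + (m - m./2) * 'C(m./2, 2).

Lemma half_kr k r : r <= 1 -> (k + k + r)./2 = k.
Proof.
case: r => [|[|//]] _.
  by rewrite addn0 addnn; exact: half_double.
by rewrite addn1 addnn; exact: (half_bit_double k true).
Qed.

Lemma gfE k r : r <= 1 -> gf (k + k + r) * 2 + 2 * k * (k + r) = k * (k + r) * (k + k + r).
Proof.
move=> hr; rewrite /gf half_kr //.
have -> : k + k + r - k = k + r by lia.
have h1 := congr1 (muln k) (C2n (k + r)).
have h2 := congr1 (muln (k + r)) (C2n k).
lia.
Qed.

Lemma split_m m : exists k r, m = k + k + r /\ r <= 1.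
Proof.
exists m./2, (odd m); split; last by case: (odd m).
have := odd_double_half m; rewrite -addnn; lia.
Qed.

Lemma prod_le0 x y k r : x <= k -> x + y = k + k + r -> x * y <= k * (k + r).
Proof.
move=> xk exy; have [a ea] : exists a, k = x + a by exists (k - x); lia.
have ey : y = x + a + a + r by lia.
subst; nia.
Qed.

Lemma prod_le x y k r : r <= 1 -> x + y = k + k + r -> x * y <= k * (k + r).
Proof.
move=> hr exy; case: (leqP x k) => hx; first exact: prod_le0.
rewrite mulnC; apply: prod_le0; lia.
Qed.

Lemma gf_ge m x : x <= m -> (m - x) * 'C(x, 2) + x * 'C(m - x, 2) <= gf m.
Proof.
move=> xm; rewrite -(leq_pmul2r (isT : 0 < 2)).
have [k [r [em hr]]] := split_m m.
have gE := @gfE k r hr; rewrite -em in gE.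
set y := m - x.
have exy : x + y = m by rewrite /y; lia.
have h1 := congr1 (muln y) (C2n x).
have h2 := congr1 (muln x) (C2n y).
have hxy : x * y <= k * (k + r) by apply: prod_le; lia.
case: (leqP 2 m) => hm.
  have h3 : x * y * (m - 2) <= k * (k + r) * (m - 2) by apply: leq_mul.
  have h4 : x * y * (m - 2) + 2 * (x * y) = x * y * m by rewrite (mulnC 2) -mulnDr subnK.
  have h5 : k * (k + r) * (m - 2) + 2 * (k * (k + r)) = k * (k + r) * m by rewrite (mulnC 2) -mulnDr subnK.
  rewrite -exy in h4.
  lia.
have hx2 : 'C(x, 2) = 0 by rewrite bin_small //; lia.
have hy2 : 'C(y, 2) = 0 by rewrite bin_small //; lia.
by rewrite hx2 hy2 !muln0.
Qed.

Lemma gf_mono m : gf m <= gf m.+1.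
Proof.
have [k [r [em hr]]] := split_m m.
rewrite -(leq_pmul2r (isT : 0 < 2)).
case: r hr em => [|[|//]] _ em; subst m.
- have g0 := @gfE k 0 isT; have g1 := @gfE k 1 isT.
  rewrite addn0 in g0 *.
  have kk : k <= k * k by case: k {g0 g1} => // k; rewrite mulSn leq_addr.
  rewrite -[(k + k).+1]addn1; nia.
- have g0 := @gfE k 1 isT; have g1 := @gfE k.+1 0 isT.
  rewrite addn0 in g1; have -> : (k + k + 1).+1 = k.+1 + k.+1 by lia.
  nia.
Qed.

Lemma gf_step m d : 100 <= m -> gf m <= gf m.-1 + 'C(d, 2) + d * m -> m <= 4 * d.
Proof.
move=> hm h; rewrite leqNgt; apply/negP => hd.
have c2 := C2n d.
have [k [r [em hr]]] := split_m m.
case: r hr em => [|[|//]] _ em; subst m.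
- case: k hm hd h => [//|j] hm hd h.
  have g0 := @gfE j 1 isT; have g1 := @gfE j.+1 0 isT.
  rewrite addn0 in g1 hm hd h.
  have e : (j.+1 + j.+1).-1 = j + j + 1 by lia.
  rewrite e in h.
  have h1 : 4 * d * j <= (j + j + 1) * j by apply: leq_mul => //; lia.
  have h2 : 4 * d * d <= (j + j + 1) * d by apply: leq_mul => //; lia.
  nia.
- have g0 := @gfE k 1 isT; have g1 := @gfE k 0 isT.
  rewrite addn0 in g1.
  have e : (k + k + 1).-1 = k + k by lia.
  rewrite e in h.
  have h1 : 4 * d * k <= (k + k) * k by apply: leq_mul => //; lia.
  have h2 : 4 * d * d <= (k + k) * d by apply: leq_mul => //; lia.
  nia.
Qed.

Section Main.
Variable V : finType.
Variable G : rel V.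
Hypothesis Gsym : symmetric G.
Hypothesis Girr : irreflexive G.
Variable t : nat.
Hypothesis tpos : 0 < t.
Hypothesis NoH : forall u v (Z B : {set V}), G u v -> B \subset Nb G u :&: Nb G v ->
  u \notin Z -> v \notin Z -> (forall z, z \in Z -> B \subset Nb G z) ->
  t <= #|B| -> t <= #|Z| + 2 -> False.

Definition degS (S : {set V}) w := #|S :&: Nb G w|.
Definition fS (S : {set V}) := \sum_(w in S) 'C(degS S w, 2).

Lemma card_nb (A : {set V}) z : #|A :&: Nb G z| = \sum_(b in A) (G z b : nat).
Proof.
rewrite -sum1_card big_mkcond [RHS]big_mkcond /=; apply: eq_bigr => b _.
by rewrite !inE; case: (b \in A); case: (G z b).
Qed.

Lemma dbl (T C : {set V}) :
  \sum_(z in T) #|C :&: Nb G z| = \sum_(b in C) #|T :&: Nb G b|.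
Proof.
under eq_bigr => z _ do rewrite card_nb.
rewrite exchange_big /=; apply: eq_bigr => b _; rewrite card_nb.
by apply: eq_bigr => z _; rewrite Gsym.
Qed.

Lemma IA j (S C Ex : {set V}) :
  C \subset S -> (forall b, b \in C -> #|S| <= 4 * degS S b) ->
  t * 5 ^ j <= #|C| -> 20 * (#|Ex| + j) <= #|S| ->
  exists Z : {set V}, [/\ Z \subset S, (forall z, z \in Z -> z \notin Ex), #|Z| = j &
    t <= #|[set b in C | Z \subset Nb G b]|].
Proof.
elim: j C Ex => [|j IH] C Ex CS hdeg hC hm.
  exists set0; split; [exact: sub0set | by move=> z; rewrite inE | by rewrite cards0 | ].
  have -> : [set b in C | set0 \subset Nb G b] = C by apply/setP => b; rewrite inE sub0set andbT.
  by move: hC; rewrite expn0 muln1.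
set T := S :\: Ex.
have hsum : #|C| * #|S| <= 4 * \sum_(z in T) #|C :&: Nb G z| + 4 * (#|C| * #|Ex|).
  rewrite dbl.
  have : \sum_(b in C) #|S| <= \sum_(b in C) (4 * #|T :&: Nb G b| + 4 * #|Ex|).
    apply: leq_sum => b bC.
    apply: leq_trans (hdeg b bC) _; rewrite -mulnDr leq_mul2l /degS /=.
    have : S :&: Nb G b \subset (T :&: Nb G b) :|: Ex.
      apply/subsetP => w; rewrite !inE; case: (w \in Ex) => //=; by rewrite orbF.
    move/subset_leq_card; rewrite cardsU; lia.
  move=> h; rewrite sum_nat_const big_split /= sum_nat_const -big_distrr /= in h; lia.
have [z zT hz] : exists2 z, z \in T & #|C| <= 5 * #|C :&: Nb G z|.
  apply/exists_inP; apply: contraT; rewrite negb_exists_in => /forall_inP hno.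
  have h2 : \sum_(z in T) (5 * #|C :&: Nb G z| + 1) <= \sum_(z in T) #|C|.
    by apply: leq_sum => z zT; have := hno z zT; rewrite -ltnNge addn1.
  rewrite sum_nat_const big_split /= sum_nat_const -big_distrr /= in h2.
  have hT : #|T| <= #|S| by apply: subset_leq_card; apply: subsetDl.
  have c1 : 1 <= #|C| by apply: leq_trans hC; rewrite muln_gt0 tpos expn_gt0.
  set s := \sum_(z in T) _ in hsum h2.
  have p1 : (#|S| - #|T|) * (#|C| - 1) >= 0 by [].
  have p2 : #|C| * (20 * (#|Ex| + j.+1)) <= #|C| * #|S| by rewrite leq_mul2l hm orbT.
  nia.
have zS : z \in S by move: zT; rewrite inE => /andP[].
have zEx : z \notin Ex by move: zT; rewrite inE => /andP[].
have [Z' [Z'S Z'Ex cZ' hZ']] :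
  exists Z' : {set V}, [/\ Z' \subset S, (forall w, w \in Z' -> w \notin z |: Ex), #|Z'| = j &
    t <= #|[set b in C :&: Nb G z | Z' \subset Nb G b]|].
  apply: IH.
  - by apply: subset_trans CS; apply: subsetIl.
  - by move=> b; rewrite inE => /andP[bC _]; exact: hdeg.
  - by rewrite -(leq_pmul2l (isT : 0 < 5)); apply: leq_trans hz; rewrite mulnCA -expnS.
  - by rewrite cardsU1 zEx; lia.
have zZ' : z \notin Z' by apply/negP => /Z'Ex; rewrite !inE eqxx.
exists (z |: Z'); split.
- by rewrite subUset sub1set zS Z'S.
- move=> w; rewrite !inE => /orP[/eqP->//|/Z'Ex]; by rewrite !inE negb_or => /andP[].
- by rewrite cardsU1 zZ' cZ'.
- apply: leq_trans hZ' _; apply: subset_leq_card; apply/subsetP => b; rewrite !inE.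
  case/andP => /andP[bC Gzb] sZ; rewrite bC /= subUset sZ andbT sub1set inE.
  by rewrite Gsym.
Qed.


Lemma codeg (S : {set V}) u v : (forall b, b \in S -> #|S| <= 4 * degS S b) ->
  20 * (t + 2) <= #|S| -> G u v -> #|S :&: Nb G u :&: Nb G v| < t * 5 ^ (t - 2).
Proof.
move=> hdeg hm Guv; rewrite ltnNge; apply/negP => hC.
have sub : S :&: Nb G u :&: Nb G v \subset S by rewrite -setIA subsetIl.
have hd : forall b, b \in S :&: Nb G u :&: Nb G v -> #|S| <= 4 * degS S b.
  by move=> b /(subsetP sub); exact: hdeg.
have c2 : #|[set u; v]| <= 2 by rewrite cards2; case: (u != v).
have hm' : 20 * (#|[set u; v]| + (t - 2)) <= #|S| by lia.
have [Z [ZS ZEx cZ hB]] := IA sub hd hC hm'.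
apply: (@NoH u v Z [set b in S :&: Nb G u :&: Nb G v | Z \subset Nb G b]) Guv _ _ _ _ hB _.
- by apply/subsetP => b; rewrite !inE => /andP[/andP[/andP[_ ->] ->] _].
- by apply/negP => /ZEx; rewrite !inE eqxx.
- by apply/negP => /ZEx; rewrite !inE eqxx orbT.
- move=> z zZ; apply/subsetP => b; rewrite !inE => /andP[_ /subsetP /(_ z zZ)].
  by rewrite inE Gsym.
- rewrite cZ; lia.
Qed.

Lemma fS_del (S : {set V}) v : v \in S ->
  fS S <= fS (S :\ v) + 'C(degS S v, 2) + degS S v * #|S|.
Proof.
move=> vS; rewrite /fS (big_setD1 v vS) /=.
have h : forall w, w \in S :\ v -> 'C(degS S w, 2) <= 'C(degS (S :\ v) w, 2) + (G v w) * #|S|.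
  move=> w wS.
  have e : degS S w = (G w v) + degS (S :\ v) w.
    have e1 : (S :&: Nb G w) :\ v = (S :\ v) :&: Nb G w.
      by apply/setP => x; rewrite !inE; case: (x == v); rewrite ?andbF.
    by rewrite /degS (cardsD1 v (S :&: Nb G w)) e1 !inE vS.
  rewrite e Gsym; case: (G v w) => /=; last by rewrite add0n mul0n addn0.
  rewrite add1n binS bin1 mul1n leq_add2l /degS; apply: subset_leq_card.
  exact: subset_trans (subsetIl _ _) (subsetDl _ _).
have h2 : \sum_(w in S :\ v) 'C(degS S w, 2) <=
  \sum_(w in S :\ v) ('C(degS (S :\ v) w, 2) + (G v w) * #|S|) by apply: leq_sum.
rewrite big_split /= -big_distrl /= -card_nb in h2.
have h3 : #|(S :\ v) :&: Nb G v| <= degS S v.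
  by apply: subset_leq_card; apply: setSI; apply: subD1set.
have h4 : #|(S :\ v) :&: Nb G v| * #|S| <= degS S v * #|S| by apply: leq_mul.
lia.
Qed.

Definition K := t * 5 ^ t.
Definition m0 := 100 + 12 * K + 20 * (t + 2).
Definition Bd := m0 * 'C(m0, 2).

Lemma lemA (S : {set V}) : m0 <= #|S| ->
  (forall w, w \in S -> fS (S :\ w) + (gf #|S| - gf #|S|.-1) <= fS S) -> fS S <= gf #|S|.
Proof.
rewrite /m0 => hm hall; set m := #|S| in hm hall *.
have mindeg : forall w, w \in S -> m <= 4 * degS S w.
  move=> w wS; apply: (@gf_step m (degS S w)); first lia.
  have := hall w wS; have := fS_del wS; have := gf_mono m.-1.
  rewrite prednK; last by lia.
  rewrite -/m; lia.
have codeg' : forall u v, G u v -> #|S :&: Nb G u :&: Nb G v| < K.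
  move=> u v Guv; apply: leq_trans (codeg mindeg _ Guv) _; first lia.
  by rewrite /K leq_mul2l leq_exp2l ?leq_subr ?orbT.
have [w0 w0S] : exists w0, w0 \in S by apply/set0Pn; rewrite -card_gt0 -/m; lia.
pose w := [arg max_(w > w0 in S) degS S w].
have [wS maxw] : w \in S /\ forall z, z \in S -> degS S z <= degS S w.
  by rewrite /w; case: arg_maxnP => // x xS hx; split => // z zS; exact: hx.
set Y := S :&: Nb G w; set X := S :\: Nb G w.
have cXY : #|Y| + #|X| = m by rewrite cardsID.
have degX : forall z, z \in X -> degS S z <= #|Y|.
  by move=> z; rewrite inE => /andP[_ zS]; exact: maxw.
have degY : forall y, y \in Y -> degS S y <= #|X|.
  move=> y; rewrite inE => /andP[yS Gwy]; rewrite inE in Gwy.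
  have e : degS S y = #|S :&: Nb G y :&: Nb G w| + #|(S :&: Nb G y) :\: Nb G w| by rewrite cardsID.
  have i1 : #|S :&: Nb G y :&: Nb G w| < K by rewrite setIAC; exact: codeg'.
  have sX : (S :&: Nb G y) :\: Nb G w \subset X by apply: setSD; apply: subsetIl.
  case: (eqVneq (S :&: Nb G y :&: Nb G w) set0) => [e0|/set0Pn [y' y'in]].
    by rewrite e e0 cards0 add0n; exact: subset_leq_card sX.
  move: y'in; rewrite !inE => /andP[/andP[y'S Gyy'] Gwy'].
  have i2 : #|S :&: Nb G y' :&: Nb G w| < K by rewrite setIAC; exact: codeg'.
  have e2 : degS S y' = #|S :&: Nb G y' :&: Nb G w| + #|(S :&: Nb G y') :\: Nb G w| by rewrite cardsID.
  have d2 := mindeg y' y'S.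
  have sX2 : (S :&: Nb G y') :\: Nb G w \subset X by apply: setSD; apply: subsetIl.
  have hU := cardsUI ((S :&: Nb G y) :\: Nb G w) ((S :&: Nb G y') :\: Nb G w).
  have hU1 : #|((S :&: Nb G y) :\: Nb G w) :|: ((S :&: Nb G y') :\: Nb G w)| <= #|X|.
    by apply: subset_leq_card; rewrite subUset sX sX2.
  have hI : #|((S :&: Nb G y) :\: Nb G w) :&: ((S :&: Nb G y') :\: Nb G w)| < K.
    apply: leq_ltn_trans (codeg' y y' Gyy'); apply: subset_leq_card.
    by apply/subsetP => x; rewrite !inE => /andP[/andP[_ /andP[-> ->]] /andP[_ /andP[_ ->]]].
  rewrite /m0 in hm; lia.
rewrite /fS (big_setID (Nb G w)) /= -/X -/Y.
have s1 : \sum_(i in Y) 'C(degS S i, 2) <= #|Y| * 'C(#|X|, 2).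
  by rewrite -sum_nat_const; apply: leq_sum => i iY; apply: leq_bin2l; exact: degY.
have s2 : \sum_(i in X) 'C(degS S i, 2) <= #|X| * 'C(#|Y|, 2).
  by rewrite -sum_nat_const; apply: leq_sum => i iX; apply: leq_bin2l; exact: degX.
have := @gf_ge m #|Y| (leq_trans (leq_addr _ _) (eq_leq cXY)).
have -> : m - #|Y| = #|X| by lia.
lia.
Qed.

Lemma prog j (S : {set V}) : #|S| = m0 + j -> fS S <= gf (m0 + j) + (Bd - j).
Proof.
elim: j S => [|j IH] S hS.
  rewrite addn0 in hS *; rewrite subn0; apply: leq_trans _ (leq_addl _ _).
  rewrite /fS /Bd -hS -sum_nat_const; apply: leq_sum => w _; apply: leq_bin2l.
  by rewrite /degS; apply: subset_leq_card; apply: subsetIl.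
case: (boolP [exists w in S, fS S < fS (S :\ w) + (gf #|S| - gf #|S|.-1)]).
  case/exists_inP => w wS hw.
  have := IH (S :\ w); rewrite (cardsD1 w S) wS in hS.
  have e : #|S :\ w| = m0 + j by lia.
  move=> /(_ e) hI.
  have := gf_mono (m0 + j).
  rewrite (cardsD1 w S) wS hS addnS /= in hw.
  rewrite addnS; lia.
rewrite negb_exists_in => /forall_inP hall.
have := @lemA S; rewrite hS => h; apply: leq_trans (leq_addr _ _); apply: h; first lia.
move=> w wS; have := hall w wS; rewrite -ltnNge ltnS hS; by [].
Qed.

Lemma final_bound (S : {set V}) : m0 + Bd <= #|S| -> fS S <= gf #|S|.
Proof.
move=> h; have := @prog (#|S| - m0) S ltac:(lia).
have -> : m0 + (#|S| - m0) = #|S| by lia.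
have -> : Bd - (#|S| - m0) = 0 by lia.
by rewrite addn0.
Qed.

End Main.

Lemma card_lt n h : h <= n -> #|[set u : 'I_n | u < h]| = h.
Proof.
move=> hn; rewrite -sum1dep_card -(big_ord_widen n (fun _ => 1) hn) /=.
by rewrite sum_nat_const card_ord muln1.
Qed.

Lemma sumc (T : finType) (P : pred T) c : \sum_(x | P x) c = #|[set x | P x]| * c.
Proof. by rewrite -sum1dep_card big_distrl /=; apply: eq_bigr => x _; rewrite mul1n. Qed.

Lemma turan_sym n : symmetric (turan2 n).
Proof. by move=> a b; rewrite /turan2 eq_sym. Qed.

Lemma turan_irr n : irreflexive (turan2 n).
Proof. by move=> a; rewrite /turan2 eqxx. Qed.

Lemma turan_count n : Ncount P3 (turan2 n) = gf n.
Proof.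
rewrite (NcountP3 (@turan_sym n) (@turan_irr n)).
set h := n./2.
have hn : h <= n by have := odd_double_half n; rewrite -addnn /h; lia.
have cl := card_lt hn.
have cg : #|[set u : 'I_n | ~~ (u < h)]| = n - h.
  have := cardsC [set u : 'I_n | u < h]; rewrite card_ord cl.
  have -> : ~: [set u : 'I_n | u < h] = [set u : 'I_n | ~~ (u < h)] by apply/setP => u; rewrite !inE.
  lia.
have dg : forall v : 'I_n, #|Nb (turan2 n) v| = if v < h then n - h else h.
  move=> v; case: ifP => hv.
    rewrite -cg; apply: eq_card => u; by rewrite !inE /turan2 hv.
  rewrite -cl; apply: eq_card => u; by rewrite !inE /turan2 hv; case: (u < h).
rewrite (eq_bigr _ (fun v _ => congr1 (fun k => 'C(k, 2)) (dg v))).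
rewrite (bigID (fun v : 'I_n => v < h)) /=.
rewrite (eq_bigr (fun _ => 'C(n - h, 2))); last by move=> v ->.
rewrite [X in _ + X](eq_bigr (fun _ => 'C(h, 2))); last by move=> v /negbTE ->.
rewrite !sumc cl cg /gf -/h.
by [].
Qed.

Lemma gfun_turan n : simpleb [ffun p : 'I_n * 'I_n => turan2 n p.1 p.2].
Proof.
apply/andP; split; apply/forallP => a; first (apply/forallP => b; rewrite !ffunE /= turan_sym //).
by rewrite ffunE turan_irr.
Qed.

Theorem theorem1p1 (U : finType) (F : rel U) :
  simple_graph F ->
  chromatic_number F = 3 ->
  (exists x y, color_critical_edge F x y) ->
  exists n0, forall n, n0 <= n -> ex n P3 F = Ncount P3 (turan2 n).
Proof.
move=> [Fsym Firr] chi [x [y [Fxy crit]]].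
have ncol : ~~ colorable F 2 by apply/negP => c2; have := chrom_le c2; rewrite chi.
have irr' : irreflexive (delete_edge F x y) by move=> z; rewrite /delete_edge Firr.
have ccol : colorable (delete_edge F x y) 2.
  apply: colorable_mono (chrom_col irr'); move: crit; rewrite chi; lia.
have tpos : 0 < #|U| by apply/card_gt0P; exists x.
exists (m0 #|U| + Bd #|U|) => n hn.
have turF : Ncount F (turan2 n) = 0.
  by apply: (@bip_free _ _ F (turan2 n) (fun i => i < n./2)) => // a b.
apply/eqP; rewrite eqn_leq; apply/andP; split.
  rewrite turan_count; apply/bigmax_leqP => g /andP[simp /eqP free].
  case/andP: simp => /forallP hs /forallP hi.
  have gsym : symmetric (Defs.grel g) by move=> a b; apply/eqP; have := forallP (hs a) b.
  have girr : irreflexive (Defs.grel g) by move=> a; apply/negbTE; exact: hi.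
  rewrite (NcountP3 gsym girr).
  have NoH : forall u v (Z B : {set 'I_n}), Defs.grel g u v -> B \subset Nb (Defs.grel g) u :&: Nb (Defs.grel g) v ->
      u \notin Z -> v \notin Z -> (forall z, z \in Z -> B \subset Nb (Defs.grel g) z) ->
      #|U| <= #|B| -> #|U| <= #|Z| + 2 -> False.
    move=> u v Z B Guv BN uZ vZ ZB tB tZ.
    have := embed Fsym Firr gsym girr ncol Fxy ccol Guv BN uZ vZ ZB tB tZ.
    by rewrite free.
  have := @final_bound _ _ gsym _ tpos NoH setT.
  rewrite cardsT card_ord => /(_ hn).
  move=> h; apply: leq_trans h; rewrite /fS; apply: eq_leq.
  by apply: eq_big => [v|v _]; [rewrite inE | rewrite /degS setTI].
rewrite -(Ncount_ext P3 (G1 := Defs.grel [ffun p : 'I_n * 'I_n => turan2 n p.1 p.2])); last first.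
  by move=> a b; rewrite /Defs.grel ffunE.
apply: (@leq_bigmax_cond _ _ (fun g => Ncount P3 (Defs.grel g))).
rewrite gfun_turan /=; apply/eqP.
rewrite (Ncount_ext F (G2 := turan2 n)) //.
by move=> a b; rewrite /Defs.grel ffunE.
Qed.
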